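(* Let $r>1$ and let $k,\ell,m$ be positive integers. Choose $x_0$ uniformly at random from the vertex set of the $(k,\ell,m)$-superstar and run the Moran process with fitness $r$ on it with initial mutant $x_0$. Then the extinction probability is at least $k/(2r(m+k))$.
   Context: Moran process: given a directed graph $G$ and fitness $r$, one vertex $x_0$ is a mutant, the rest non-mutants. At each step a vertex $v$ is chosen with probability proportional to fitness (mutants $r$, non-mutants $1$), an out-neighbour $w$ of $v$ is chosen uniformly at random and the state of $v$ is copied to $w$. Extinction: eventually no vertex is a mutant. The $(k,\ell,m)$-superstar has vertex set the disjoint union of reservoirs $R_1,\dots,R_\ell$ of size $m$, vertices $v_{i,j}$ ($i\in[\ell]$, $j\in[k]$), and a centre $v^*$; its edges are, for each $i\in[\ell]$: from $v^*$ to every vertex of $R_i$, from every vertex of $R_i$ to $v_{i,1}$, from $v_{i,j}$ to $v_{i,j+1}$ for $j\in[k-1]$, and from $v_{i,k}$ to $v^*$. *)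

(* Defs.v *)
From HB Require Import structures.
From mathcomp Require Import all_boot all_order all_algebra.
From mathcomp Require Import all_classical all_reals topology normedtype sequences.
Set Implicit Arguments. Unset Strict Implicit. Unset Printing Implicit Defensive.
Import Order.TTheory GRing.Theory Num.Theory numFieldNormedType.Exports.
Local Open Scope ring_scope.

Section Moran.
Variables (R : realType) (V : finType) (edge : rel V) (r : R).

Definition outN (v : V) : {set V} := [set w | edge v w]%SET.

Definition fitness (S : {set V}) (v : V) : R := if v \in S then r else 1.

Definition total_fitness (S : {set V}) : R := \sum_(v : V) fitness S v.

Definition reproduce (S : {set V}) (v w : V) : {set V} :=
  if v \in S then w |: S else S :\ w.

Definition moran_step (S T : {set V}) : R :=
  \sum_(v : V) \sum_(w in outN v)
     (fitness S v / total_fitness S) * (#|outN v|%:R)^-1 *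
     (reproduce S v w == T)%:R.

Fixpoint moran_nstep (n : nat) (S T : {set V}) : R :=
  match n with
  | 0 => (S == T)%:R
  | n'.+1 => \sum_(U : {set V}) moran_step S U * moran_nstep n' U T
  end.

(* extinction probability starting from the single mutant x0: the probability
   that the process eventually reaches the (absorbing) empty state, i.e. the
   limit of the probability of being extinct at time n *)
Definition extinction_prob (x0 : V) : R :=
  limn (fun n => moran_nstep n [set x0]%SET (@finset.set0 V)).

Definition uniform_extinction_prob : R :=
  (#|V|%:R)^-1 * \sum_(x0 : V) extinction_prob x0.

End Moran.

(* Vertices:
   inl (inl (i, j)) : j-th vertex of reservoir R_i   (i < l, j < m)
   inl (inr (i, j)) : v_{i, j+1}                     (i < l, j < k)
   inr tt           : the centre v^*                                   *)
Definition superstar_vertex (k l m : nat) : finType :=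
  (('I_l * 'I_m) + ('I_l * 'I_k) + unit)%type.

Definition superstar_edge (k l m : nat) : rel (superstar_vertex k l m) :=
  fun x y =>
    match x, y with
    | inr _, inl (inl _) => true
    | inl (inl (i, _)), inl (inr (i', j)) => (i == i') && (val j == 0)%N
    | inl (inr (i, j)), inl (inr (i', j')) =>
        (i == i') && (val j' == (val j).+1)%N
    | inl (inr (_, j)), inr _ => (val j == k.-1)%N
    | _, _ => false
    end.

(* Main.v *)
Require Import Defs.
From HB Require Import structures.
From mathcomp Require Import all_boot all_order all_algebra.
From mathcomp Require Import all_classical all_reals topology normedtype sequences.
From mathcomp Require Import ring lra zify.
Import Order.TTheory GRing.Theory Num.Theory numFieldNormedType.Exports.
Local Open Scope ring_scope.

Section Gen.
Variables (R : realType) (V : finType) (edge : rel V) (r : R).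
Hypothesis r0 : 0 < r.
Hypothesis hout : forall v, (0 < #|outN edge v|)%N.
Implicit Types (S T U : {set V}) (v w : V).

Definition wt S v :=
  fitness r S v / total_fitness r S * (#|outN edge v|%:R)^-1.

Lemma fit_gt0 S v : 0 < fitness r S v.
Proof. by rewrite /fitness; case: ifP. Qed.

Lemma tot_gt0 S v : 0 < total_fitness r S.
Proof.
rewrite /total_fitness (bigD1 v) //=.
have := fit_gt0 S v.
have : 0 <= \sum_(i | i != v) fitness r S i by apply: sumr_ge0 => i _; exact/ltW/fit_gt0.
lra.
Qed.

Lemma wt_ge0 S v : 0 <= wt S v.
Proof.
rewrite /wt; apply: mulr_ge0; last by rewrite invr_ge0.
apply: divr_ge0; first exact/ltW/fit_gt0.
exact/ltW/(tot_gt0 S v).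
Qed.

Lemma step_def S T : moran_step edge r S T =
  \sum_v \sum_(w in outN edge v) wt S v * (reproduce S v w == T)%:R.
Proof. by []. Qed.

Lemma sum_wt S v : \sum_(w in outN edge v) wt S v = fitness r S v / total_fitness r S.
Proof.
rewrite sumr_const /wt -mulrnAr -[_ *+ #|_|]mulr_natr mulVf ?mulr1 //.
by rewrite pnatr_eq0 -lt0n.
Qed.

Local Notation e0 := (@finset.set0 V).
Variable v0 : V.

Lemma sum_all S : \sum_v fitness r S v / total_fitness r S = 1.
Proof. by rewrite -mulr_suml divff // gt_eqF // (tot_gt0 S v0). Qed.

Lemma step_ge0 S T : 0 <= moran_step edge r S T.
Proof.
rewrite step_def; apply: sumr_ge0 => v _; apply: sumr_ge0 => w _.
by apply: mulr_ge0; [exact: wt_ge0|exact: ler0n].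
Qed.

Lemma sum_eq1 (X : {set V}) : \sum_T ((X == T)%:R : R) = 1.
Proof.
rewrite (bigD1 X) //= eqxx big1 ?addr0 // => T hT.
by rewrite eq_sym (negbTE hT).
Qed.

Lemma sum_ind (f : {set V} -> R) X : \sum_U f U * (U == X)%:R = f X.
Proof.
rewrite (bigD1 X) //= eqxx mulr1 big1 ?addr0 // => T hT.
by rewrite (negbTE hT) mulr0.
Qed.

Lemma sum_step S : \sum_T moran_step edge r S T = 1.
Proof.
rewrite -(sum_all S).
under eq_bigr do rewrite step_def.
rewrite exchange_big; apply: eq_bigr => v _ /=.
rewrite exchange_big /= -sum_wt; apply: eq_bigr => w _.
by rewrite -mulr_sumr sum_eq1 mulr1.
Qed.

Lemma reproduce0 v w : reproduce e0 v w = e0.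
Proof. by rewrite /reproduce finset.in_set0 finset.set0D. Qed.

Lemma step00 T : moran_step edge r e0 T = (e0 == T)%:R.
Proof.
transitivity ((\sum_v \sum_(w in outN edge v) wt e0 v) * (e0 == T)%:R).
  rewrite step_def mulr_suml; apply: eq_bigr => v _.
  by rewrite mulr_suml; apply: eq_bigr => w _; rewrite reproduce0.
by rewrite (eq_bigr _ (fun v _ => sum_wt e0 v)) sum_all mul1r.
Qed.

Notation a n S := (moran_nstep edge r n S e0).

Lemma a0 n : a n e0 = 1.
Proof.
elim: n => [|n IH] /=; first by rewrite eqxx.
rewrite (bigD1 e0) //= step00 eqxx mul1r IH big1 ?addr0 // => U hU.
by rewrite step00 eq_sym (negbTE hU) mul0r.
Qed.

Lemma nstep_ge0 n S T : 0 <= moran_nstep edge r n S T.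
Proof.
elim: n S => [|n IH] S /=; first exact: ler0n.
by apply: sumr_ge0 => U _; apply: mulr_ge0; [exact: step_ge0|exact: IH].
Qed.

Lemma a_le1 n S : a n S <= 1.
Proof.
elim: n S => [|n IH] S /=; first by case: (_ == _).
rewrite -(sum_step S); apply: ler_sum => U _.
by rewrite -[X in _ <= X]mulr1; apply: ler_wpM2l; [exact: step_ge0|exact: IH].
Qed.

Lemma a_mono n S : a n S <= a n.+1 S.
Proof.
elim: n S => [|n IH] S /=.
  rewrite sum_ind; case: (eqVneq S e0) => [->|hS]; first by rewrite step00 eqxx.
  exact: step_ge0.
apply: ler_sum => U _; apply: ler_wpM2l; [exact: step_ge0|exact: IH].
Qed.

Lemma a_key n S : S != e0 ->
  moran_step edge r S S * a n S + moran_step edge r S e0 <= a n.+1 S.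
Proof.
move=> hS /=.
rewrite (bigD1 S) //= (bigD1 e0) /=; last by rewrite eq_sym.
rewrite a0 mulr1.
have : 0 <= \sum_(i | (i != S) && (i != e0)) moran_step edge r S i * a n i.
  by apply: sumr_ge0 => U _; apply: mulr_ge0; [exact: step_ge0|exact: nstep_ge0].
lra.
Qed.

Section Ext.
Variable x : V.
Let S := [set x].
Let u := fun n => a n S.

Lemma u_nd : nondecreasing_seq u.
Proof. by apply/nondecreasing_seqP => n; exact: a_mono. Qed.

Lemma u_cv : cvgn u.
Proof.
apply: nondecreasing_is_cvgn; first exact: u_nd.
by exists 1 => _ [n _ <-]; exact: a_le1.
Qed.

Lemma ext_ge n : u n <= extinction_prob edge r x.
Proof. exact: (nondecreasing_cvgn_le u_nd u_cv). Qed.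

Lemma ext_ge0 : 0 <= extinction_prob edge r x.
Proof. exact: le_trans (nstep_ge0 _ _ _) (ext_ge 0). Qed.

Lemma ext_le1 : extinction_prob edge r x <= 1.
Proof. by apply: limr_le; [exact: u_cv | apply: nearW => n; exact: a_le1]. Qed.

Lemma ext_fix : moran_step edge r S S * extinction_prob edge r x
   + moran_step edge r S e0 <= extinction_prob edge r x.
Proof.
set q := moran_step edge r S S; set p := moran_step edge r S e0.
have hS : S != e0 by apply/set0Pn; exists x; rewrite /S finset.set11.
have hc : ((fun n => q * u n + p) @ \oo --> q * extinction_prob edge r x + p)%classic.
  have h1 : ((fun n => q * u n) @ \oo --> q * limn u)%classic.
    by apply: cvgMl_tmp; exact: u_cv.
  have h2 : ((fun n : nat => p) @ \oo --> p)%classic by exact: cvg_cst.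
  exact: (cvgD h1 h2).
apply: (cvgr_to_le hc).
apply: nearW => n /=; apply: (le_trans (a_key n S hS)); exact: (ext_ge n.+1).
Qed.

Lemma qp_bound : 1 - r / total_fitness r S <=
  moran_step edge r S S + moran_step edge r S e0.
Proof.
have hsum := sum_all S.
rewrite (bigD1 x) //= {1}/fitness /S finset.in_set1 eqxx in hsum.
rewrite !step_def -big_split /= (bigD1 x) //=.
have -> : \sum_(v | v != x) (\sum_(w in outN edge v) wt S v * (reproduce S v w == S)%:R +
      \sum_(w in outN edge v) wt S v * (reproduce S v w == e0)%:R) =
    \sum_(v | v != x) fitness r S v / total_fitness r S.
  apply: eq_bigr => v hv; rewrite -big_split /= -sum_wt; apply: eq_bigr => w _.
  rewrite -mulrDr /reproduce /S finset.in_set1 (negbTE hv).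
  case: (eqVneq w x) => [->|hw].
    rewrite finset.setDv eqxx.
    have -> : (e0 == [set x]) = false.
      by apply/negbTE; rewrite eq_sym; apply/finset.set0Pn; exists x; rewrite finset.set11.
    by rewrite add0r mulr1.
  have -> : [set x] :\ w = [set x].
    apply/finset.setP => z; rewrite !inE; case: (eqVneq z x) => [->|]; last by rewrite andbF.
    by rewrite eq_sym hw.
  have -> : ([set x] == e0) = false.
    by apply/negbTE; apply/finset.set0Pn; exists x; rewrite finset.set11.
  by rewrite eqxx addr0 mulr1.
have : 0 <= \sum_(w in outN edge x) wt S x * (reproduce S x w == S)%:R +
      \sum_(w in outN edge x) wt S x * (reproduce S x w == e0)%:R.
  by apply: addr_ge0; apply: sumr_ge0 => w _; apply: mulr_ge0;
    [exact: wt_ge0|exact: ler0n|exact: wt_ge0|exact: ler0n].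
rewrite /S in hsum *. lra.
Qed.

Lemma p_bound y : y != x -> outN edge y = [set x] ->
  (total_fitness r S)^-1 <= moran_step edge r S e0.
Proof.
move=> hyx hy.
rewrite step_def (bigD1 y) //= hy big_set1.
have -> : reproduce S y x = e0.
  by rewrite /reproduce /S finset.in_set1 (negbTE hyx) finset.setDv.
rewrite eqxx mulr1 /wt hy cards1 invr1 mulr1 /fitness /S finset.in_set1 (negbTE hyx) mul1r.
rewrite lerDl; apply: sumr_ge0 => v _; apply: sumr_ge0 => w _.
by apply: mulr_ge0; [exact: wt_ge0|exact: ler0n].
Qed.

Lemma ext_lb y : y != x -> outN edge y = [set x] ->
  1 <= (1 + r) * extinction_prob edge r x.
Proof.
move=> hyx hy.
have hf := ext_fix. have hqp := qp_bound. have hp := p_bound y hyx hy.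
have E0 := ext_ge0. have E1 := ext_le1.
have ht : 0 < (total_fitness r S)^-1 by rewrite invr_gt0 (tot_gt0 S x).
move: hf hqp hp E0 E1 ht.
set E := extinction_prob edge r x. set q := moran_step edge r S S.
set p := moran_step edge r S e0. set ti := (total_fitness r S)^-1.
move=> hf hqp hp E0 E1 ht.
have h1 : (q - (1 - r * ti - p)) * E >= 0 by apply: mulr_ge0 => //; lra.
have h2 : (p - ti) * (1 - E) >= 0 by apply: mulr_ge0 => //; lra.
have : ti * 1 <= ti * ((1 + r) * E) by nra.
by rewrite ler_pM2l.
Qed.

End Ext.

End Gen.

Section SS.
Variables (k l m : nat).
Hypotheses (hk : (0 < k)%N) (hl : (0 < l)%N) (hm : (0 < m)%N).
Local Notation V := (superstar_vertex k l m).
Local Notation E := (@superstar_edge k l m).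

Lemma ss_out (v : V) : (0 < #|outN E v|)%N.
Proof.
apply/card_gt0P.
case: v => [[[i j]|[i j]]|[]].
- exists (inl (inr (i, Ordinal hk))); by rewrite inE /= eqxx.
- case: (ltnP j.+1 k) => hj.
    exists (inl (inr (i, Ordinal hj))); by rewrite inE /= !eqxx.
  exists (inr tt); rewrite inE /=.
  by apply/eqP; have := ltn_ord j; lia.
- exists (inl (inl (Ordinal hl, Ordinal hm))); by rewrite inE.
Qed.

Lemma ss_pred_path i (j : 'I_k) : exists y : V, y != inl (inr (i, j)) /\
  outN E y = [set inl (inr (i, j))].
Proof.
case: j => [[|j] hj].
- exists (inl (inl (i, Ordinal hm))); split => //.
  apply/finset.setP => z; rewrite !inE.
  case: z => [[[i' j']|[i' j']]|[]] //=.
  apply/idP/idP.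
    case/andP => /eqP <- /eqP hj'; apply/eqP; congr (inl (inr (_, _))).
    exact: val_inj.
  by move/eqP => -[-> ->]; rewrite /= eqxx.
- have hj0 : (j < k)%N by lia.
  exists (inl (inr (i, Ordinal hj0))); split.
    apply/negP => /eqP h; case: h => h; lia.
  apply/finset.setP => z; rewrite !inE.
  case: z => [[[i' j']|[i' j']]|[]] //=.
  + apply/idP/idP.
      case/andP => /eqP <- /eqP hj'; apply/eqP; congr (inl (inr (_, _))).
      exact: val_inj.
    by move/eqP => -[-> ->]; rewrite /= !eqxx.
  + apply/negbTE; lia.
Qed.

Lemma ss_pred_centre : exists y : V, y != inr tt /\ outN E y = [set inr tt].
Proof.
have hk1 : (k.-1 < k)%N by lia.
exists (inl (inr (Ordinal hl, Ordinal hk1))); split => //.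
apply/finset.setP => z; rewrite !inE.
case: z => [[[i' j']|[i' j']]|[]] //=.
  apply/negbTE; apply/negP => /andP [_ /eqP h].
  have := ltn_ord j'; lia.
by rewrite eqxx.
Qed.

End SS.

Lemma inv_le (R : realType) (s e : R) : 0 < s -> 1 <= s * e -> s^-1 <= e.
Proof.
move=> hs h; rewrite -[e](mulKf (lt0r_neq0 hs)) -{1}[s^-1]mulr1.
by apply: ler_wpM2l => //; rewrite invr_ge0 ltW.
Qed.

Theorem lemma4p2 (R : realType) (r : R) (k l m : nat) :
  1 < r -> (0 < k)%N -> (0 < l)%N -> (0 < m)%N ->
  k%:R / (2 * r * (m + k)%:R) <=
    uniform_extinction_prob (@superstar_edge k l m) r.
Proof.
move=> hr hk hl hm.
have r0 : 0 < r by lra.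
have hout := @ss_out k l m hk hl hm.
pose v0 : superstar_vertex k l m := inr tt.
have Eb := @ext_ge0 R _ _ r r0 hout v0.
have Elb := @ext_lb R _ _ r r0 hout v0.
have s0 : 0 < 1 + r by lra.
have hsum : ((l * k)%:R + 1) / (1 + r) <=
    \sum_(x : superstar_vertex k l m) extinction_prob (@superstar_edge k l m) r x.
  rewrite big_sumType big_sumType /=.
  have h1 : 0 <= \sum_(x : 'I_l * 'I_m)
      extinction_prob (@superstar_edge k l m) r (inl (inl x)).
    by apply: sumr_ge0 => x _; exact: Eb.
  have h2 : (l * k)%:R / (1 + r) <= \sum_(x : 'I_l * 'I_k)
      extinction_prob (@superstar_edge k l m) r (inl (inr x)).
    apply: le_trans (_ : \sum_(x : 'I_l * 'I_k) (1 + r)^-1 <= _).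
      by rewrite sumr_const card_prod !card_ord -[X in _ <= X]mulr_natl mulrC.
    apply: ler_sum => -[i j] _; apply: inv_le => //.
    have [y [hy1 hy2]] := @ss_pred_path k l m hk hl hm i j.
    exact: Elb hy1 hy2.
  have h3 : (1 + r)^-1 <= \sum_(x : unit)
      extinction_prob (@superstar_edge k l m) r (inr x).
    rewrite (bigD1 tt) //=.
    have : 0 <= \sum_(x : unit | x != tt)
       extinction_prob (@superstar_edge k l m) r (inr x).
      by apply: sumr_ge0 => x _; exact: Eb.
    have : (1 + r)^-1 <= extinction_prob (@superstar_edge k l m) r (inr tt).
      apply: inv_le => //.
      have [y [hy1 hy2]] := @ss_pred_centre k l m hk hl hm.
      exact: Elb hy1 hy2.
    lra.
  rewrite mulrDl mul1r; lra.
rewrite /uniform_extinction_prob.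
have hN : #|superstar_vertex k l m| = (l * m + l * k + 1)%N.
  by rewrite /superstar_vertex !card_sum !card_prod !card_ord card_unit.
rewrite hN.
apply: le_trans (_ : _ <= ((l * m + l * k + 1)%:R)^-1 * (((l * k)%:R + 1) / (1 + r))) _;
  last by apply: ler_wpM2l => //; rewrite invr_ge0.
rewrite !natrD !natrM.
set K := k%:R; set L := l%:R; set M := m%:R.
have K0 : 0 < K by rewrite ltr0n.
have L0 : 0 < L by rewrite ltr0n.
have M0 : 0 < M by rewrite ltr0n.
have D0 : 0 < 2 * r * (M + K) by apply: mulr_gt0; lra.
have N0 : 0 < L * M + L * K + 1 by nra.
rewrite ler_pdivrMr // -[X in _ <= X]mulrA ler_pdivlMl // mulrAC ler_pdivlMr //.
have e : (L * K + 1) * (2 * r * (M + K)) - (L * M + L * K + 1) * K * (1 + r) =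
  ((L * M + L * K + 1) * K) * (r - 1) + 2 * (r * M) by ring.
have h1 : 0 <= ((L * M + L * K + 1) * K) * (r - 1).
  by apply: mulr_ge0; [apply: mulr_ge0|]; lra.
have h2 : 0 <= r * M by apply: mulr_ge0; lra.
lra.
Qed.
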